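(* Let $A$ be a $3\times 3$ skew-symmetric integer matrix. Then $A$ passes the algorithm described in the context if and only if $A$ is mutation-cyclic.
   Context: Notation: $S(p,q,r)=\begin{pmatrix}0&-p&-r\\ p&0&-q\\ r&q&0\end{pmatrix}$ for integers $p,q,r$. Matrix mutation: $\mu_k(B)=(b'_{ij})$ with $b'_{ij}=-b_{ij}$ if $i=k$ or $j=k$, and $b'_{ij}=b_{ij}+\operatorname{sgn}(b_{ik})\max(b_{ik}b_{kj},0)$ otherwise. A column is sign-coherent if all its nonzero entries have the same sign. A $3\times3$ skew-symmetric matrix is acyclic if its quiver ($b_{ij}$ arrows $i\to j$ when $b_{ij}>0$) has no oriented cycle (equivalently, it has a sign-coherent column), and cyclic otherwise; it is mutation-cyclic if every matrix in its mutation class is cyclic. $B,C$ are essentially equivalent if for some permutation $\sigma$ of $\{1,2,3\}$, $C_{ij}=B_{\sigma(i)\sigma(j)}$ for all $i,j$ or $C_{ij}=-B_{\sigma(i)\sigma(j)}$ for all $i,j$. The standard form of $B$ is the first matrix in the list $S(-a,-b,c),S(-a,b,c),S(a,-b,c),S(a,b,c)$ ($a\ge b\ge c\ge0$) essentially equivalent to $B$. Algorithm: replace the input by its standard form, written $S(-a,-b,c)$ with $|a|\ge|b|\ge|c|\ge0$, and set $A_1$ equal to it. Step 1: if $a\ge b\ge c\ge 2$ and $bc-a\ge b$, the input passes; otherwise, if some column is sign-coherent or $c\le 2$, it fails. Step 2 (for the current $A_i$): if some matrix essentially equivalent to $\mu_3(A_i)$ has the form $S(-d,-e,f)$ with $d\ge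 e\ge f\ge 2$, let $A_{i+1}$ be such a matrix; otherwise the input fails. Then: if $f\ge 3$ and $ef-d\ge e$, it passes; if $f=2$ it passes if $d=e$ and fails if $d>e$; otherwise increase $i$ by one and repeat Step 2. *)

(* Defs.v *)
From mathcomp Require Import all_boot all_order all_fingroup all_algebra.
Set Implicit Arguments. Unset Strict Implicit. Unset Printing Implicit Defensive.
Import Order.TTheory GRing.Theory Num.Theory.
Local Open Scope ring_scope.

Definition S (p q r : int) : 'M[int]_3 :=
  \matrix_(i < 3, j < 3)
    match nat_of_ord i, nat_of_ord j with
    | 0%N, 1%N => - p | 0%N, 2%N => - r
    | 1%N, 0%N => p   | 1%N, 2%N => - q
    | 2%N, 0%N => r   | 2%N, 1%N => q
    | _, _ => 0
    end.

Definition skew_symmetric (B : 'M[int]_3) : Prop := B^T = - B.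

Definition mu (k : 'I_3) (B : 'M[int]_3) : 'M[int]_3 :=
  \matrix_(i < 3, j < 3)
    if (i == k) || (j == k) then - B i j
    else B i j + Num.sg (B i k) * Num.max (B i k * B k j) 0.

Definition mutseq (ks : seq 'I_3) (B : 'M[int]_3) : 'M[int]_3 :=
  foldl (fun M k => mu k M) B ks.

Definition sign_coherent_col (B : 'M[int]_3) (j : 'I_3) : Prop :=
  (forall i, 0 <= B i j) \/ (forall i, B i j <= 0).

(* quiver: b_ij arrows i -> j when b_ij > 0 *)
Definition arrow (B : 'M[int]_3) : rel 'I_3 := fun i j => 0 < B i j.

Definition cyclic (B : 'M[int]_3) : Prop :=
  exists i j, arrow B i j /\ connect (arrow B) j i.

Definition acyclic (B : 'M[int]_3) : Prop := ~ cyclic B.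

Definition mutation_cyclic (B : 'M[int]_3) : Prop :=
  forall ks : seq 'I_3, cyclic (mutseq ks B).

Definition ess_equiv (B C : 'M[int]_3) : Prop :=
  exists s : {perm 'I_3},
    (forall i j, C i j = B (s i) (s j)) \/ (forall i j, C i j = - B (s i) (s j)).

Definition std_list (a b c : int) : seq 'M[int]_3 :=
  [:: S (- a) (- b) c; S (- a) b c; S a (- b) c; S a b c].

Definition std_form (B C : 'M[int]_3) : Prop :=
  exists a b c : int, [/\ a >= b, b >= c & c >= 0] /\
    exists k : nat, (k < 4)%N /\ C = nth 0 (std_list a b c) k /\ ess_equiv B C /\
      (forall j : nat, (j < k)%N -> ~ ess_equiv B (nth 0 (std_list a b c) j)).

(* entries a, b, c when C is written as S(-a,-b,c) *)
Definition ent_a (C : 'M[int]_3) : int := - C 1 0.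
Definition ent_b (C : 'M[int]_3) : int := - C 2 1.
Definition ent_c (C : 'M[int]_3) : int := C 2 0.

(* Step 2, iterated from the current A_i; "passes" = some run terminates with pass. *)
Inductive step2_passes : 'M[int]_3 -> Prop :=
| step2_pass_f3 (A : 'M[int]_3) (d e f : int) :
    [/\ d >= e, e >= f & f >= 2] -> ess_equiv (mu 2 A) (S (- d) (- e) f) ->
    f >= 3 -> e * f - d >= e -> step2_passes A
| step2_pass_f2 (A : 'M[int]_3) (d e f : int) :
    [/\ d >= e, e >= f & f >= 2] -> ess_equiv (mu 2 A) (S (- d) (- e) f) ->
    f = 2 -> d = e -> step2_passes A
| step2_repeat (A : 'M[int]_3) (d e f : int) :
    [/\ d >= e, e >= f & f >= 2] -> ess_equiv (mu 2 A) (S (- d) (- e) f) ->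
    f >= 3 -> e * f - d < e -> step2_passes (S (- d) (- e) f) -> step2_passes A.

(* Step 1 on A_1 (already in standard form), then Step 2 *)
Definition passes_from_std (A1 : 'M[int]_3) : Prop :=
  let a := ent_a A1 in let b := ent_b A1 in let c := ent_c A1 in
  let step1_pass := [/\ a >= b, b >= c, c >= 2 & b * c - a >= b] in
  step1_pass \/
  [/\ ~ step1_pass, ~ (exists j, sign_coherent_col A1 j), ~ (c <= 2)
    & step2_passes A1].

Definition alg_passes (A : 'M[int]_3) : Prop :=
  exists A1, std_form A A1 /\ passes_from_std A1.

(* Main.v *)
Require Import Defs.
From Stdlib Require Import Classical_Prop.
From mathcomp Require Import all_boot all_order all_fingroup all_algebra zify ring lra.
Set Implicit Arguments. Unset Strict Implicit. Unset Printing Implicit Defensive.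
Import Order.TTheory GRing.Theory Num.Theory.
Local Open Scope ring_scope.



Definition M (x y z : int) := S (-x) (-y) z.
Definition g (a b : int) : int := Num.sg a * Num.max (a * b) 0.

Lemma g_pos a b : 0 < a -> 0 < b -> g a b = a * b.
Proof. move=> ha hb; rewrite /g gtr0_sg // mul1r; case: lerP => // h; nia. Qed.
Lemma g_neg a b : a < 0 -> b < 0 -> g a b = - (a * b).
Proof. move=> ha hb; rewrite /g ltr0_sg // mulN1r; case: lerP => //; nia. Qed.
Lemma g_0l a b : a * b <= 0 -> g a b = 0.
Proof. move=> h; rewrite /g; case: lerP => //; [ by rewrite mulr0 | nia]. Qed.
Lemma g_comm a b : g a b = g b a.
Proof.
rewrite /g (mulrC b a); case: (lerP (a*b) 0) => h; first by rewrite !mulr0.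
case: (ltrgt0P a) => ha; case: (ltrgt0P b) => hb;
 rewrite ?ha ?hb ?sgr0; try rewrite (gtr0_sg ha); try rewrite (ltr0_sg ha);
 try rewrite (gtr0_sg hb); try rewrite (ltr0_sg hb); try nia.
Qed.
Lemma g_NN a b : g (-a) (-b) = - g a b.
Proof. by rewrite /g mulrNN sgrN mulNr. Qed.
Lemma g_skew a : g (-a) a = 0.
Proof. apply: g_0l; nia. Qed.
Lemma g_skew' a : g a (-a) = 0.
Proof. apply: g_0l; nia. Qed.

Lemma M01 x y z : M x y z 0 1 = x. Proof. by rewrite !mxE /= opprK. Qed.
Lemma M12 x y z : M x y z 1 2 = y. Proof. by rewrite !mxE /= opprK. Qed.
Lemma M20 x y z : M x y z 2 0 = z. Proof. by rewrite !mxE /=. Qed.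

Lemma ord3 (i : 'I_3) : i = 0 \/ i = 1 \/ i = 2.
Proof. by case: i => [[|[|[|?]]] Hi] //; [left|right;left|right;right]; apply/val_inj. Qed.

Definition mutT (k : 'I_3) (t : int * int * int) : int * int * int :=
  let: (x, y, z) := t in
  match nat_of_ord k with
  | 0%N => (- x, y + g (- x) (- z), - z)
  | 1%N => (- x, - y, z + g (- y) (- x))
  | _ => (x + g (- z) (- y), - y, - z)
  end.

Definition MT (t : int * int * int) := let: (x, y, z) := t in M x y z.

Lemma mu_M k t : mu k (MT t) = MT (mutT k t).
Proof.
case: t => [[x y] z] /=.
apply/matrixP => i j.
case: (ord3 k) => [->|[->|->]]; case: (ord3 i) => [->|[->|->]]; case: (ord3 j) => [->|[->|->]];
 rewrite !mxE /= ?opprK; rewrite -?/(g _ _) ?g_skew ?g_skew' ?g_NN ?addr0 ?add0r //;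
 rewrite g_comm; ring.
Qed.


Definition mutseqT (ks : seq 'I_3) t := foldl (fun t k => mutT k t) t ks.
Lemma mutseq_M ks t : mutseq ks (MT t) = MT (mutseqT ks t).
Proof. by elim: ks t => [|k ks IH] t //=; rewrite /mutseq /= mu_M -IH. Qed.

Lemma skew_M A : skew_symmetric A -> A = M (A 0 1) (A 1 2) (A 2 0).
Proof.
move=> H; have E i j : A j i = - A i j by have := congr1 (fun N : 'M[int]_3 => N i j) (H : A^T = - A); rewrite !mxE.
apply/matrixP => i j.
case: (ord3 i) => [->|[->|->]]; case: (ord3 j) => [->|[->|->]]; rewrite !mxE /= ?opprK //;
 rewrite ?(E 0 1) ?(E 1 2) ?(E 2 0) ?opprK //.
- by have := E 0 0; lia.
- by have := E 1 1; lia.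
- by have := E 2 2; lia.
Qed.

Definition cycT (x y z : int) := (0 < x /\ 0 < y /\ 0 < z) \/ (x < 0 /\ y < 0 /\ z < 0).

Lemma rank_nocyc B (h : 'I_3 -> nat) :
  (forall i j, arrow B i j -> (h i < h j)%N) -> ~ cyclic B.
Proof.
move=> Hh [i [j [Hij /connectP [p Hp Hl]]]].
have : (h j <= h (last j p))%N.
  elim: p j Hp {Hl Hij} => [|k p IH] j //= /andP [Hjk Hp].
  exact: leq_trans (ltnW (Hh _ _ Hjk)) (IH _ Hp).
rewrite -Hl => H1; have := Hh _ _ Hij; lia.
Qed.

Lemma ord3_all (P : 'I_3 -> Prop) : P 0 -> P 1 -> P 2 -> forall i, P i.
Proof. by move=> ? ? ? i; case: (ord3 i) => [->|[->|->]]. Qed.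

Definition hh (a b c : nat) (i : 'I_3) : nat := nth 0%N [:: a; b; c] i.

Ltac rk a b c := apply: (@rank_nocyc _ (hh a b c));
   apply: ord3_all; apply: ord3_all;
   rewrite /arrow /hh !mxE /= ?opprK; lia.

Lemma cyclic_M x y z : cyclic (M x y z) <-> cycT x y z.
Proof.
split.
- move=> Hc; rewrite /cycT.
  case: (ltrgt0P x) => hx; case: (ltrgt0P y) => hy; case: (ltrgt0P z) => hz;
   try by [left; lia | right; lia];
   exfalso; move: Hc;
   first [ rk 0%N 1%N 2%N | rk 0%N 2%N 1%N | rk 1%N 0%N 2%N | rk 1%N 2%N 0%N | rk 2%N 0%N 1%N | rk 2%N 1%N 0%N ].

- case=> [[hx [hy hz]]|[hx [hy hz]]].
  + exists 0, 1; split; first by rewrite /arrow M01.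
    apply: (connect_trans (connect1 (_ : arrow _ 1 2)) (connect1 (_ : arrow _ 2 0)));
      rewrite /arrow ?M12 ?M20 //.
  + exists 1, 0; split; first by rewrite /arrow !mxE /=; lia.
    apply: (connect_trans (connect1 (_ : arrow _ 0 2)) (connect1 (_ : arrow _ 2 1)));
      rewrite /arrow !mxE /=; lia.
Qed.



Definition goodT (x y z : int) :=
  (2 <= x /\ 2 <= y /\ 2 <= z /\ x*x + y*y + z*z - x*y*z <= 4) \/
  (x <= -2 /\ y <= -2 /\ z <= -2 /\ x*x + y*y + z*z + x*y*z <= 4).
Definition goodP (t : int * int * int) := let: (x, y, z) := t in goodT x y z.
Definition cycP (t : int * int * int) := let: (x, y, z) := t in cycT x y z.

Lemma L1 (x y z : int) : 2 <= x -> 2 <= y -> 2 <= z -> x*x + y*y + z*z - x*y*z <= 4 ->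
  2 <= y * z - x.
Proof.
move=> hx hy hz hC.
have E : x * (y*z - x) = y*y + z*z - (x*x + y*y + z*z - x*y*z) by ring.
have H4 : 4 <= y * z by nia.
set a := y * z - x in E *.
have Hpos : 0 < x * a by nia.
have Ha : 0 < a by nia.
case: (lerP 2 a) => // Ha2.
have a1 : a = 1 by lia.
rewrite a1 mulr1 in E.
have : (y - z) * (y - z) >= 0 by nia.
nia.
Qed.

Lemma good_mut k t : goodP t -> goodP (mutT k t).
Proof.
case: t => [[x y z]] /=.
case: (ord3 k) => [->|[->|->]] /=; rewrite /goodT.
- case=> [[hx [hy [hz hC]]]|[hx [hy [hz hC]]]].
  + rewrite g_neg; try lia. right. have := @L1 y x z; nia.
  + rewrite g_pos; try lia. left. have := @L1 (-y) (-x) (-z); nia.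
- case=> [[hx [hy [hz hC]]]|[hx [hy [hz hC]]]].
  + rewrite g_neg; try lia. right. have := @L1 z x y; nia.
  + rewrite g_pos; try lia. left. have := @L1 (-z) (-x) (-y); nia.
- case=> [[hx [hy [hz hC]]]|[hx [hy [hz hC]]]].
  + rewrite g_neg; try lia. right. have := @L1 x y z; nia.
  + rewrite g_pos; try lia. left. have := @L1 (-x) (-y) (-z); nia.
Qed.

Lemma L2 (x y z : int) : 2 <= x -> x <= y -> y <= z -> 2 * z <= x * y ->
  x*x + y*y + z*z - x*y*z <= 4.
Proof.
move=> hx hxy hyz h.
have h1 : 0 <= (z - y) * (x * y - 2 * z) by nia.
have h2 : 0 <= (x - 2) * (z - y) * y by nia.
have h3 : 0 <= (x - 2) * (y * y - x - 2) by nia.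
nia.
Qed.

Definition negT (t : int * int * int) : int * int * int :=
  let: (x, y, z) := t in (-x, -y, -z).

Lemma mutT_neg k t : mutT k (negT t) = negT (mutT k t).
Proof.
case: t => [[x y z]]; case: (ord3 k) => [->|[->|->]] /=; rewrite ?opprK g_NN;
  congr (_, _, _); ring.
Qed.

Lemma mutseqT_neg ks t : mutseqT ks (negT t) = negT (mutseqT ks t).
Proof. by elim: ks t => [|k ks IH] t //=; rewrite /mutseqT /= mutT_neg -IH. Qed.

Lemma cycP_neg t : cycP (negT t) <-> cycP t.
Proof. case: t => [[x y z]] /=; rewrite /cycT; lia. Qed.

Lemma mutT_inv k t : mutT k (mutT k t) = t.
Proof.
case: t => [[x y z]]; case: (ord3 k) => [->|[->|->]] /=; rewrite ?opprK g_NN;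
  congr (_, _, _); ring.
Qed.

Lemma good_cyc t : goodP t -> cycP t.
Proof. case: t => [[x y z]] /=; rewrite /goodT /cycT; lia. Qed.

Lemma good_mutseq ks t : goodP t -> goodP (mutseqT ks t).
Proof. elim: ks t => [|k ks IH] t //= H; apply: IH; exact: good_mut. Qed.

Lemma ncyc1 k t : ~ cycP (mutT k t) -> exists ks, ~ cycP (mutseqT ks t).
Proof. by move=> H; exists [:: k]. Qed.

Lemma descent_pos (n : nat) : forall x y z : int, 0 < x -> 0 < y -> 0 < z ->
  x + y + z <= n%:Z -> ~ goodT x y z -> exists ks, ~ cycP (mutseqT ks (x, y, z)).
Proof.
elim: n => [|n IH] x y z hx hy hz hn hg; first lia.
have Hstep : forall k (x' y' z' : int), mutT k (x, y, z) = negT (x', y', z') ->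
    0 < x' -> 0 < y' -> 0 < z' -> x' + y' + z' < x + y + z -> ~ goodT x' y' z' ->
    exists ks, ~ cycP (mutseqT ks (x, y, z)).
  move=> k x' y' z' E h1 h2 h3 hs hg'.
  have [ks Hks] := IH x' y' z' h1 h2 h3 ltac:(lia) hg'.
  exists (k :: ks); change (mutseqT (k :: ks) (x,y,z)) with (mutseqT ks (mutT k (x,y,z))).
  by rewrite E mutseqT_neg cycP_neg.
case: (lerP 2 x) => hx2; last first.
  case: (lerP z y) => hzy; [apply: (ncyc1 (k:=0)) | apply: (ncyc1 (k:=1))];
    rewrite /= /cycT g_neg; nia.
case: (lerP 2 y) => hy2; last first.
  case: (lerP x z) => hzy; [apply: (ncyc1 (k:=1)) | apply: (ncyc1 (k:=2))];
    rewrite /= /cycT g_neg; nia.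
case: (lerP 2 z) => hz2; last first.
  case: (lerP y x) => hzy; [apply: (ncyc1 (k:=2)) | apply: (ncyc1 (k:=0))];
    rewrite /= /cycT g_neg; nia.
have hC : 4 < x*x + y*y + z*z - x*y*z by move: hg; rewrite /goodT; lia.
have L2' : forall a b c : int, 2 <= a -> 2 <= b -> a <= c -> b <= c -> 2 * c <= a * b ->
    a*a + b*b + c*c - a*b*c <= 4.
  move=> a b c ha hb hac hbc h; case: (lerP a b) => hab.
    exact: L2.
  have := @L2 b a c hb ltac:(lia) hac ltac:(nia); nia.
case: (lerP x z) => hxz; case: (lerP y z) => hyz.
-
  case: (lerP 0 (z - y * x)) => hz'.
    apply: (ncyc1 (k:=1)); rewrite /= /cycT g_neg; nia.
  have hlt : y * x - z < z.
    case: (lerP z (y * x - z)) => // h; have := L2' x y z hx2 hy2 hxz hyz ltac:(nia); nia.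
  apply: (Hstep 1 x y (y * x - z)) => //; try lia.
  + by rewrite /= g_neg; try lia; congr (_, _, _); ring.
  + rewrite /goodT; nia.
-
  case: (lerP 0 (y - x * z)) => hy'.
    apply: (ncyc1 (k:=0)); rewrite /= /cycT g_neg; nia.
  have hlt : x * z - y < y.
    case: (lerP y (x * z - y)) => // h; have := L2' x z y hx2 hz2 ltac:(lia) ltac:(lia) ltac:(nia); nia.
  apply: (Hstep 0 x (x * z - y) z) => //; try lia.
  + by rewrite /= g_neg; try lia; congr (_, _, _); ring.
  + rewrite /goodT; nia.
-
  case: (lerP 0 (x - z * y)) => hx'.
    apply: (ncyc1 (k:=2)); rewrite /= /cycT g_neg; nia.
  have hlt : z * y - x < x.
    case: (lerP x (z * y - x)) => // h; have := L2' y z x hy2 hz2 ltac:(lia) ltac:(lia) ltac:(nia); nia.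
  apply: (Hstep 2 (z * y - x) y z) => //; try lia.
  + by rewrite /= g_neg; try lia; congr (_, _, _); ring.
  + rewrite /goodT; nia.
- case: (lerP y x) => hyx.
  + case: (lerP 0 (x - z * y)) => hx'.
      apply: (ncyc1 (k:=2)); rewrite /= /cycT g_neg; nia.
    have hlt : z * y - x < x.
      case: (lerP x (z * y - x)) => // h; have := L2' y z x hy2 hz2 ltac:(lia) ltac:(lia) ltac:(nia); nia.
    apply: (Hstep 2 (z * y - x) y z) => //; try lia.
    * by rewrite /= g_neg; try lia; congr (_, _, _); ring.
    * rewrite /goodT; nia.
  + case: (lerP 0 (y - x * z)) => hy'.
      apply: (ncyc1 (k:=0)); rewrite /= /cycT g_neg; nia.
    have hlt : x * z - y < y.
      case: (lerP y (x * z - y)) => // h; have := L2' x z y hx2 hz2 ltac:(lia) ltac:(lia) ltac:(nia); nia.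
    apply: (Hstep 0 x (x * z - y) z) => //; try lia.
    * by rewrite /= g_neg; try lia; congr (_, _, _); ring.
    * rewrite /goodT; nia.
Qed.

Lemma goodT_neg x y z : goodT (-x) (-y) (-z) <-> goodT x y z.
Proof. rewrite /goodT; split; nia. Qed.

Lemma mc_good x y z : (forall ks, cycP (mutseqT ks (x, y, z))) -> goodT x y z.
Proof.
move=> H.
have Hpos : forall a b c : int, 0 < a -> 0 < b -> 0 < c ->
    (forall ks, cycP (mutseqT ks (a, b, c))) -> goodT a b c.
  move=> a b c ha hb hc H'.
  case: (Classical_Prop.classic (goodT a b c)) => // hg.
  have [ks Hks] := @descent_pos (absz (a + b + c)) a b c ha hb hc ltac:(lia) hg.
  by case: Hks.
case: (H [::]) => /= [[hx [hy hz]]|[hx [hy hz]]].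
- exact: Hpos.
- apply/goodT_neg; apply: Hpos; try lia.
  move=> ks; apply/cycP_neg; rewrite -mutseqT_neg /= !opprK; exact: H.
Qed.



Lemma ess_transfer x y z u v w :
  ess_equiv (M x y z) (M u v w) -> goodT u v w -> goodT x y z.
Proof.
move=> [s H] G.
have d01 : s 0 != s 1 by rewrite (inj_eq perm_inj).
have d12 : s 1 != s 2 by rewrite (inj_eq perm_inj).
have d02 : s 0 != s 2 by rewrite (inj_eq perm_inj).
have Hd : forall (C : 'M[int]_3), (forall i j, C i j = M x y z (s i) (s j)) ->
   goodT (C 0 1) (C 1 2) (C 2 0) \/ goodT (- C 0 1) (- C 1 2) (- C 2 0) -> goodT x y z.
  move=> C HC; rewrite !HC.
  case: (ord3 (s 0)) => [E0|[E0|E0]]; case: (ord3 (s 1)) => [E1|[E1|E1]]; case: (ord3 (s 2)) => [E2|[E2|E2]];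
   rewrite ?E0 ?E1 ?E2 in d01 d12 d02 * => //; rewrite !mxE /= ?opprK /goodT; lia.
case: H => H.
- apply: (Hd (M u v w)) => //; left; by rewrite !mxE /= !opprK.
- apply: (Hd (- M u v w)) => [i j|]; first by rewrite mxE H opprK.
  right; by rewrite !mxE /= !opprK.
Qed.

Definition p3 (a b c : 'I_3) (i : 'I_3) : 'I_3 :=
  match nat_of_ord i with 0%N => a | 1%N => b | _ => c end.

Lemma ess_p3 a b c (inj : injective (p3 a b c)) (B C : 'M[int]_3) :
  (forall i j, C i j = B (p3 a b c i) (p3 a b c j)) -> ess_equiv B C.
Proof. move=> H; exists (perm inj); left => i j; by rewrite !permE. Qed.
Lemma ess_p3N a b c (inj : injective (p3 a b c)) (B C : 'M[int]_3) :
  (forall i j, C i j = - B (p3 a b c i) (p3 a b c j)) -> ess_equiv B C.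
Proof. move=> H; exists (perm inj); right => i j; by rewrite !permE. Qed.

Ltac inj_tac := apply: ord3_all; apply: ord3_all; rewrite /p3 /= => //; move/(congr1 val) => //=.

Lemma inj012 : injective (p3 0 1 2). Proof. inj_tac. Qed.
Lemma inj120 : injective (p3 1 2 0). Proof. inj_tac. Qed.
Lemma inj201 : injective (p3 2 0 1). Proof. inj_tac. Qed.
Lemma inj102 : injective (p3 1 0 2). Proof. inj_tac. Qed.
Lemma inj021 : injective (p3 0 2 1). Proof. inj_tac. Qed.
Lemma inj210 : injective (p3 2 1 0). Proof. inj_tac. Qed.

Ltac ent_tac := apply: ord3_all; apply: ord3_all; rewrite /p3 !mxE /= ?opprK //.

Lemma e_id x y z : ess_equiv (M x y z) (M x y z). Proof. apply: (ess_p3 inj012); ent_tac. Qed.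
Lemma e_rot x y z : ess_equiv (M x y z) (M y z x). Proof. apply: (ess_p3 inj120); ent_tac. Qed.
Lemma e_rot2 x y z : ess_equiv (M x y z) (M z x y). Proof. apply: (ess_p3 inj201); ent_tac. Qed.
Lemma e_sw01 x y z : ess_equiv (M x y z) (M (-x) (-z) (-y)). Proof. apply: (ess_p3 inj102); ent_tac. Qed.
Lemma e_sw12 x y z : ess_equiv (M x y z) (M (-z) (-y) (-x)). Proof. apply: (ess_p3 inj021); ent_tac. Qed.
Lemma e_sw02 x y z : ess_equiv (M x y z) (M (-y) (-x) (-z)). Proof. apply: (ess_p3 inj210); ent_tac. Qed.
Lemma e_idN x y z : ess_equiv (M x y z) (M (-x) (-y) (-z)). Proof. apply: (ess_p3N inj012); ent_tac. Qed.
Lemma e_rotN x y z : ess_equiv (M x y z) (M (-y) (-z) (-x)). Proof. apply: (ess_p3N inj120); ent_tac. Qed.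
Lemma e_rot2N x y z : ess_equiv (M x y z) (M (-z) (-x) (-y)). Proof. apply: (ess_p3N inj201); ent_tac. Qed.
Lemma e_sw01N x y z : ess_equiv (M x y z) (M x z y). Proof. apply: (ess_p3N inj102); ent_tac. Qed.
Lemma e_sw12N x y z : ess_equiv (M x y z) (M z y x). Proof. apply: (ess_p3N inj021); ent_tac. Qed.
Lemma e_sw02N x y z : ess_equiv (M x y z) (M y x z). Proof. apply: (ess_p3N inj210); ent_tac. Qed.



Lemma step1_good (a b c : int) : b <= a -> c <= b -> 2 <= c -> b <= b * c - a -> goodT a b c.
Proof.
move=> hab hbc hc h; left; do 3 (split; first lia).
have h1 : (a - b) * (a - b * c + b) <= 0 by nia.
have h2 : 0 <= (c - 2) * (b * b - c - 2) by nia.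
nia.
Qed.

Lemma skew_S p q r : skew_symmetric (S p q r).
Proof. apply/matrixP; apply: ord3_all; apply: ord3_all; rewrite !mxE /= ?opprK //. Qed.

Lemma mu2_M x y z : mu 2 (M x y z) = M (x + g (- z) (- y)) (- y) (- z).
Proof. exact: (mu_M 2 (x, y, z)). Qed.

Lemma goodA_of_mu2 A : skew_symmetric A -> goodT ((mu 2 A) 0 1) ((mu 2 A) 1 2) ((mu 2 A) 2 0) ->
  goodT (A 0 1) (A 1 2) (A 2 0).
Proof.
move=> /skew_M ->; rewrite !M01 !M12 !M20.
move: (A 0 1) (A 1 2) (A 2 0) => x y z.
rewrite mu2_M !M01 !M12 !M20 => H.
have := good_mut 2 (t := (x + g (- z) (- y), - y, - z)) H.
by rewrite -[(x + g (- z) (- y), - y, - z)]/(mutT 2 (x, y, z)) mutT_inv.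
Qed.

Lemma skew_mu2 A : skew_symmetric A -> skew_symmetric (mu 2 A).
Proof. move=> /skew_M ->; rewrite mu2_M; exact: skew_S. Qed.

Lemma good_of_ess B d e f : skew_symmetric B -> ess_equiv B (M d e f) -> goodT d e f ->
  goodT (B 0 1) (B 1 2) (B 2 0).
Proof. move=> /skew_M HB He G; rewrite HB in He; exact: ess_transfer He G. Qed.

Lemma step2_good A : step2_passes A -> skew_symmetric A -> goodT (A 0 1) (A 1 2) (A 2 0).
Proof.
elim => {A} [A d e f [hde hef hf2] He hf3 hcond | A d e f [hde hef hf2] He hf2' hde' |
             A d e f [hde hef hf2] He hf3 hcond _ IH] HA; apply: goodA_of_mu2 => //;
  apply: (good_of_ess (skew_mu2 HA) He).
- exact: step1_good.
- left; subst; do 3 (split; first lia); nia.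
- have := IH (skew_S _ _ _); by rewrite !M01 !M12 !M20.
Qed.

Lemma step2_ok (n : nat) : forall a b c : int, a <= n%:Z -> b <= a -> c <= b -> 2 <= c ->
  a*a + b*b + c*c - a*b*c <= 4 -> b * c - a < b -> step2_passes (M a b c).
Proof.
elim: n => [|n IH] a b c hn hab hbc hc hC hlt; first lia.
have ha' : 2 <= c * b - a by have := @L1 a b c ltac:(lia) ltac:(lia) hc hC; lia.
have hba : b < a by nia.
have hlt' : c * b - a < b by nia.
have hmu : mu 2 (M a b c) = M (a - c * b) (- b) (- c).
  by rewrite mu2_M g_neg; try lia; congr M; ring.
have Hdef : forall d e f : int, ess_equiv (mu 2 (M a b c)) (M d e f) ->
   e <= d -> f <= e -> 2 <= f -> d*d + e*e + f*f - d*e*f <= 4 -> d <= n%:Z ->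
   step2_passes (M a b c).
  move=> d e f He hde hef hf hC' hdn.
  case: (lerP 3 f) => hf3.
    case: (lerP e (e * f - d)) => hcond.
      exact: (step2_pass_f3 (And3 hde hef hf) He hf3 hcond).
    exact: (step2_repeat (And3 hde hef hf) He hf3 hcond (IH d e f hdn hde hef hf hC' hcond)).
  have hf2 : f = 2 by lia.
  apply: (step2_pass_f2 (And3 hde hef hf) He hf2); subst f; nia.
have E1 : b*b + (c*b-a)*(c*b-a) + c*c - b*(c*b-a)*c = a*a + b*b + c*c - a*b*c by ring.
have E2 : b*b + c*c + (c*b-a)*(c*b-a) - b*c*(c*b-a) = a*a + b*b + c*c - a*b*c by ring.
case: (lerP c (c * b - a)) => hca.
- apply: (Hdef b (c * b - a) c); try lia.
  rewrite hmu; have := e_sw02 (a - c * b) (- b) (- c); by rewrite !opprK opprB.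
- apply: (Hdef b c (c * b - a)); try lia.
  rewrite hmu; have := e_rotN (a - c * b) (- b) (- c); by rewrite !opprK opprB.
Qed.

Lemma alg_of_sorted A a b c : ess_equiv A (M a b c) -> b <= a -> c <= b -> 2 <= c ->
  a*a + b*b + c*c - a*b*c <= 4 -> alg_passes A.
Proof.
move=> He hab hbc hc hC; exists (M a b c); split.
  exists a, b, c; split; first by split; lia.
  by exists 0%N; split; [|split; [|split]].
rewrite /passes_from_std /ent_a /ent_b /ent_c !mxE /= !opprK.
case: (lerP b (b * c - a)) => h1; first by left; split; lia.
right; split.
- case; lia.
- move=> [j]; rewrite /sign_coherent_col; case: (ord3 j) => [->|[->|->]]; case=> H; have := H 0; have := H 1; have := H 2;
    rewrite !mxE /= ?opprK; lia.
- move=> hc2; have hc2' : c = 2 by lia. subst c; nia.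
- apply: (@step2_ok (absz a)); lia.
Qed.

Lemma mc_iff A : skew_symmetric A ->
  (mutation_cyclic A <-> goodT (A 0 1) (A 1 2) (A 2 0)).
Proof.
move=> /skew_M; move: (A 0 1) (A 1 2) (A 2 0) => x y z ->.
split.
- move=> H; apply: mc_good => ks; have := H ks.
  change (M x y z) with (MT (x, y, z)); rewrite mutseq_M.
  by case: (mutseqT ks (x, y, z)) => [[a b] c] /= /cyclic_M.
- move=> H ks; change (M x y z) with (MT (x, y, z)); rewrite mutseq_M.
  have := good_cyc (@good_mutseq ks (x, y, z) H).
  by case: (mutseqT ks (x, y, z)) => [[a b] c] /= /cyclic_M.
Qed.

Lemma good_alg x y z : goodT x y z -> alg_passes (M x y z).
Proof.
case=> [[hx [hy [hz hC]]]|[hx [hy [hz hC]]]];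
 case: (lerP x y) => ?; case: (lerP y z) => ?; case: (lerP x z) => ?;
 first [ apply: (alg_of_sorted (e_id _ _ _)); lia
       | apply: (alg_of_sorted (e_sw01N _ _ _)); lia
       | apply: (alg_of_sorted (e_sw02N _ _ _)); lia
       | apply: (alg_of_sorted (e_rot _ _ _)); lia
       | apply: (alg_of_sorted (e_rot2 _ _ _)); lia
       | apply: (alg_of_sorted (e_sw12N _ _ _)); lia
       | apply: (alg_of_sorted (e_idN _ _ _)); lia
       | apply: (alg_of_sorted (e_sw01 _ _ _)); lia
       | apply: (alg_of_sorted (e_sw02 _ _ _)); lia
       | apply: (alg_of_sorted (e_rotN _ _ _)); lia
       | apply: (alg_of_sorted (e_rot2N _ _ _)); lia
       | apply: (alg_of_sorted (e_sw12 _ _ _)); lia ].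
Qed.

Lemma alg_good A : skew_symmetric A -> alg_passes A -> goodT (A 0 1) (A 1 2) (A 2 0).
Proof.
move=> HA [A1 [[a [b [c [habc [k [hk [E1 [Hess _]]]]]]]] Hp]].
have HA1 : skew_symmetric A1.
  by rewrite E1; case: k hk {E1} => [|[|[|[|k]]]] //= _; apply: skew_S.
have G1 : goodT (A1 0 1) (A1 1 2) (A1 2 0).
  move: Hp; rewrite /passes_from_std.
  have E := skew_M HA1; move: (A1 0 1) (A1 1 2) (A1 2 0) E => u v w ->.
  rewrite /ent_a /ent_b /ent_c !mxE /= !opprK.
  case=> [[h1 h2 h3 h4]|[_ _ _ H2]].
  - exact: step1_good.
  - by have := step2_good H2 (skew_S _ _ _); rewrite !mxE /= !opprK.
have He := Hess; rewrite (skew_M HA1) (skew_M HA) in He.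
exact: ess_transfer He G1.
Qed.

Theorem mainTheorem8 (A : 'M[int]_3) :
  skew_symmetric A -> (alg_passes A <-> mutation_cyclic A).
Proof.
move=> HA; rewrite (mc_iff HA); split; first exact: alg_good.
move=> G; rewrite (skew_M HA); exact: good_alg.
Qed.
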